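(* Fix $\alpha\in(0,1]$, $\epsilon>0$, a function $A:(2\pi,\infty)\to[0,\infty)$ and a function $B:\{(\beta_L,\beta_R)\in(0,\infty)^2:\beta_L\beta_R>4\pi^2\}\to[0,\infty)$. Consider the class $\mathcal{C}$ of all unitary, Virasoro invariant, modular invariant 2D CFTs (any central charge $c>1$) satisfying $$\sum_{h+\bar h\leqslant\frac c{12}+\epsilon}n_{h,\bar h}e^{-(h+\bar h)\beta}\leqslant A(\beta)\ \ (\beta>2\pi),\qquad \tilde Z_L^{\rm Vir}(\alpha;\beta_L,\beta_R)\leqslant B(\beta_L,\beta_R)\ \ (\beta_L\beta_R>4\pi^2),$$ where $n_{h,\bar h}$ are Virasoro primary multiplicities. Then for each $(\beta_L,\beta_R)\in\mathcal{D}_\alpha$ there is a constant $K<\infty$, independent of the theory in $\mathcal{C}$ and of $c$, with $\left|\log Z(\beta_L,\beta_R)-\frac c{24}(\beta_L+\beta_R)\right|\leqslant K$ for all theories in $\mathcal{C}$; and for each $(\beta_L,\beta_R)$ with $(4\pi^2/\beta_L,4\pi^2/\beta_R)\in\mathcal{D}_\alpha$ there is such a constant $K$ with $\left|\log Z(\beta_L,\beta_R)-\frac{\pi^2c}{6}\left(\frac1{\beta_L}+\frac1{\beta_R}\right)\right|\leqslant K$ for all theories in $\mathcal{C}$.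
   Context: Let $\eta(\beta)=e^{-\beta/24}\prod_{n\geqslant1}(1-e^{-n\beta})$. A unitary, Virasoro invariant, modular invariant 2D CFT with central charge $c>1$ is given by a countable set of Virasoro primary weights $(h,\bar h)$, $h,\bar h\geqslant0$, with multiplicities $n_{h,\bar h}\in\mathbb{N}$, where the vacuum $(0,0)$ has multiplicity $1$ (normalizable vacuum) and primaries with $h=0$ or $\bar h=0$ other than the vacuum have the form $(J,0)$ or $(0,J)$ with $J$ a positive integer; the partition function is $Z(\beta_L,\beta_R)=\sum n_{h,\bar h}\chi_h(\beta_L)\chi_{\bar h}(\beta_R)$ with $\chi_0(\beta)=\frac{e^{\frac{c-1}{24}\beta}}{\eta(\beta)}(1-e^{-\beta})$ and $\chi_h(\beta)=\frac{e^{\frac{c-1}{24}\beta}}{\eta(\beta)}e^{-h\beta}$ for $h>0$; $Z$ is finite for all $\beta_L,\beta_R>0$ and $Z(\beta_L,\beta_R)=Z(4\pi^2/\beta_L,4\pi^2/\beta_R)$. Define $$\tilde Z_L^{\rm Vir}(\alpha;\beta_L,\beta_R)=(1-e^{-\beta_L})(1-e^{-\beta_R})+\sum_{0<\min(h,\bar h)<\frac{\alpha(c-1)}{24}}n_{h,\bar h}e^{-h\beta_L-\bar h\beta_R}+\sum_{J\geqslant1}n_{J,0}e^{-J\beta_L}(1-e^{-\beta_R})+\sum_{J\geqslant1}n_{0,J}(1-e^{-\beta_L})e^{-J\beta_R}.$$ Let $\phi_\alpha(\beta)=\max\left\{\frac{4\pi^2}{\beta},\ \frac12\left(\alpha(4\pi-\beta)+\sqrt{\alpha^2(4\pi-\beta)^2+16\pi^2(1-\alpha)}\right)\right\}$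 and $\mathcal{D}_\alpha=\{\beta_R>2\pi,\ \beta_L>\phi_\alpha(\beta_R)\}\cup\{\beta_L>2\pi,\ \beta_R>\phi_\alpha(\beta_L)\}$. *)

(* Defs.v *)
From Stdlib Require Import Reals Lra.
From Coquelicot Require Import Coquelicot.
Open Scope R_scope.

Definition psum (f : nat -> R) : Rbar := Lim_seq (fun N => sum_n f N).

Fixpoint eta_pprod (beta : R) (N : nat) : R :=
  match N with
  | O => 1
  | S k => eta_pprod beta k * (1 - exp (- (INR (S k)) * beta))
  end.

Definition eta (beta : R) : R :=
  exp (- beta / 24) * real (Lim_seq (eta_pprod beta)).

Definition chi (c h beta : R) : R :=
  exp ((c - 1) / 24 * beta) / eta beta *
  (if Req_EM_T h 0 then 1 - exp (- beta) else exp (- h * beta)).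

(** A candidate 2D CFT: central charge and the list of Virasoro primaries
    (h, hbar), each primary listed once per unit of multiplicity; [None]
    entries are empty slots (allowing finitely many primaries).  The
    multiplicity n_{h,hbar} is the number of indices i with
    [spec i = Some (h, hbar)]. *)
Record CFT := mkCFT { cc : R ; spec : nat -> option (R * R) }.

Definition Zterm (T : CFT) (bL bR : R) (i : nat) : R :=
  match spec T i with
  | Some (h, hb) => chi (cc T) h bL * chi (cc T) hb bR
  | None => 0
  end.

(** Partition function (a real number; finiteness is part of [isCFT]). *)
Definition Zpart (T : CFT) (bL bR : R) : R := real (psum (Zterm T bL bR)).

Definition isCFT (T : CFT) : Prop :=
  1 < cc T /\
  (forall i h hb, spec T i = Some (h, hb) -> 0 <= h /\ 0 <= hb) /\
  (exists i0, spec T i0 = Some (0, 0) /\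
     forall i, spec T i = Some (0, 0) -> i = i0) /\
  (forall i h hb, spec T i = Some (h, hb) -> (h = 0 \/ hb = 0) ->
     (h = 0 /\ hb = 0) \/
     exists J : nat, (1 <= J)%nat /\
       ((h = INR J /\ hb = 0) \/ (h = 0 /\ hb = INR J))) /\
  (forall bL bR, 0 < bL -> 0 < bR -> ex_series (Zterm T bL bR)) /\
  (forall bL bR, 0 < bL -> 0 < bR ->
     Zpart T bL bR = Zpart T (4 * PI ^ 2 / bL) (4 * PI ^ 2 / bR)).

Definition lightTerm (T : CFT) (eps beta : R) (i : nat) : R :=
  match spec T i with
  | Some (h, hb) =>
      if Rle_dec (h + hb) (cc T / 12 + eps) then exp (- (h + hb) * beta) else 0
  | None => 0
  end.

Definition ZLterm (T : CFT) (alpha bL bR : R) (i : nat) : R :=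
  match spec T i with
  | Some (h, hb) =>
      if Req_EM_T h 0 then
        if Req_EM_T hb 0 then (1 - exp (- bL)) * (1 - exp (- bR))
        else (1 - exp (- bL)) * exp (- hb * bR)
      else if Req_EM_T hb 0 then exp (- h * bL) * (1 - exp (- bR))
      else if Rlt_dec (Rmin h hb) (alpha * (cc T - 1) / 24)
           then exp (- h * bL - hb * bR) else 0
  | None => 0
  end.

Definition ZtildeL (T : CFT) (alpha bL bR : R) : Rbar := psum (ZLterm T alpha bL bR).

Definition phi (alpha beta : R) : R :=
  Rmax (4 * PI ^ 2 / beta)
       (/ 2 * (alpha * (4 * PI - beta) +
               sqrt (alpha ^ 2 * (4 * PI - beta) ^ 2 + 16 * PI ^ 2 * (1 - alpha)))).

Definition Dom (alpha bL bR : R) : Prop :=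
  (2 * PI < bR /\ phi alpha bR < bL) \/ (2 * PI < bL /\ phi alpha bL < bR).

Definition inClass (alpha eps : R) (A : R -> R) (B : R -> R -> R) (T : CFT) : Prop :=
  isCFT T /\
  (forall beta, 2 * PI < beta -> Rbar_le (psum (lightTerm T eps beta)) (A beta)) /\
  (forall bL bR, 0 < bL -> 0 < bR -> 4 * PI ^ 2 < bL * bR ->
     Rbar_le (ZtildeL T alpha bL bR) (B bL bR)).

(* Main.v *)
Require Import Defs.
From Stdlib Require Import Reals Lra Lia Psatz.
From Coquelicot Require Import Coquelicot.
Open Scope R_scope.

Definition Pf (beta : R) : R := real (Lim_seq (eta_pprod beta)).

Lemma exp_nb (n : nat) (beta : R) : exp (- INR n * beta) = exp (- beta) ^ n.
Proof.
  induction n as [|n IH].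
  - simpl. replace (- 0 * beta) with 0 by ring. apply exp_0.
  - rewrite S_INR. replace (- (INR n + 1) * beta) with (- INR n * beta + - beta) by ring.
    rewrite exp_plus, IH. simpl. ring.
Qed.

Lemma exp_neg_le_inv (t : R) : 0 <= t -> exp (- t) * (1 + t) <= 1.
Proof.
  intros Ht.
  assert (H1 : 1 + t <= exp t).
  { destruct (Req_dec t 0) as [->|Hn]. rewrite exp_0; lra. left; apply exp_ineq1; auto. }
  assert (H2 : exp (- t) * exp t = 1).
  { rewrite <- exp_plus. replace (-t + t) with 0 by ring. apply exp_0. }
  assert (0 < exp (- t)) by apply exp_pos.
  nra.
Qed.

Lemma exp_le (x y : R) : x <= y -> exp x <= exp y.
Proof. intros [H | ->]; [left; apply exp_increasing; auto | right; reflexivity]. Qed.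

Lemma factor_lb (a q : R) : 0 <= a <= q -> q < 1 -> exp (- (a / (1 - q))) <= 1 - a.
Proof.
  intros [Ha Haq] Hq.
  set (t := a / (1 - a)).
  assert (Hpos : 0 < 1 - a) by lra.
  assert (Ht : 0 <= t) by (unfold t; apply Rdiv_le_0_compat; lra).
  assert (Hle : t <= a / (1 - q)).
  { unfold t. unfold Rdiv. apply Rmult_le_compat_l; auto.
    apply Rinv_le_contravar; lra. }
  assert (E1 : exp (- (a / (1 - q))) <= exp (- t)) by (apply exp_le; lra).
  assert (E2 : exp (- t) * (1 + t) <= 1) by (apply exp_neg_le_inv; auto).
  assert (E3 : 1 + t = / (1 - a)) by (unfold t; field; lra).
  rewrite E3 in E2.
  assert (exp (- t) <= 1 - a).
  { apply Rmult_le_reg_r with (/ (1 - a)). apply Rinv_0_lt_compat; lra.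
    rewrite Rinv_r by lra. auto. }
  lra.
Qed.

Lemma pow_le1 (x : R) (n : nat) : 0 <= x <= 1 -> x ^ n <= 1.
Proof. intros H. induction n; simpl. lra. assert (0 <= x ^ n) by (apply pow_le; lra). nra. Qed.

Lemma pprod_S (b : R) (k : nat) : eta_pprod b (S k) = eta_pprod b k * (1 - exp (- INR (S k) * b)).
Proof. reflexivity. Qed.

Lemma pprod_lb (beta : R) (N : nat) : 0 < beta ->
  exp (- ((exp (- beta) - exp (- beta) ^ (S N)) / (1 - exp (- beta)) ^ 2)) <= eta_pprod beta N.
Proof.
  intros Hb. set (q := exp (- beta)).
  assert (Hq0 : 0 < q) by apply exp_pos.
  assert (Hq1 : q < 1). { unfold q. rewrite <- exp_0. apply exp_increasing. lra. }
  induction N as [|N IH].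
  - simpl eta_pprod. replace (- ((q - q ^ 1) / (1 - q) ^ 2)) with 0 by (field; lra). rewrite exp_0; lra.
  - rewrite pprod_S, exp_nb. fold q.
    assert (Hqn : 0 <= q ^ S N <= q).
    { split. apply pow_le; lra. replace (q ^ S N) with (q * q ^ N) by (simpl; ring).
      assert (q ^ N <= 1) by (apply pow_le1; lra). assert (0 <= q ^ N) by (apply pow_le; lra). nra. }
    pose proof (factor_lb (q ^ S N) q Hqn Hq1) as HF.
    assert (HE : exp (- ((q - q ^ S (S N)) / (1 - q) ^ 2)) =
                 exp (- ((q - q ^ S N) / (1 - q) ^ 2)) * exp (- (q ^ S N / (1 - q)))).
    { rewrite <- exp_plus. f_equal. simpl. field. lra. }
    rewrite HE. apply Rmult_le_compat; try (left; apply exp_pos); auto.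
Qed.

Lemma pprod_nonneg (beta : R) (N : nat) : 0 < beta -> 0 <= eta_pprod beta N.
Proof.
  intros Hb. eapply Rle_trans; [left; apply exp_pos | apply pprod_lb; auto].
Qed.

Lemma factor_bounds (beta : R) (n : nat) : 0 < beta -> 0 <= 1 - exp (- INR (S n) * beta) <= 1.
Proof.
  intros Hb. split.
  - assert (exp (- INR (S n) * beta) <= 1).
    { rewrite <- exp_0. apply exp_le. assert (0 < INR (S n)) by (apply lt_0_INR; lia). nra. }
    lra.
  - assert (0 < exp (- INR (S n) * beta)) by apply exp_pos. lra.
Qed.

Lemma pprod_decr (beta : R) (N : nat) : 0 < beta -> eta_pprod beta (S N) <= eta_pprod beta N.
Proof.
  intros Hb. rewrite pprod_S. pose proof (factor_bounds beta N Hb). pose proof (pprod_nonneg beta N Hb). nra.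
Qed.

Lemma pprod_le1 (beta : R) (N : nat) : 0 < beta -> eta_pprod beta N <= 1.
Proof.
  intros Hb. induction N. simpl; lra. pose proof (pprod_decr beta N Hb). lra.
Qed.

Lemma pprod_mono (b1 b2 : R) (N : nat) : 0 < b1 <= b2 -> eta_pprod b1 N <= eta_pprod b2 N.
Proof.
  intros Hb. induction N as [|N IH]. simpl; lra.
  rewrite !pprod_S. pose proof (factor_bounds b1 N ltac:(lra)). pose proof (pprod_nonneg b1 N ltac:(lra)).
  assert (exp (- INR (S N) * b2) <= exp (- INR (S N) * b1)).
  { apply exp_le. assert (0 < INR (S N)) by (apply lt_0_INR; lia). nra. }
  apply Rmult_le_compat; lra.
Qed.

Lemma Rbar_finite_between (x : Rbar) (a b : R) :
  Rbar_le (Finite a) x -> Rbar_le x (Finite b) -> x = Finite (real x) /\ a <= real x <= b.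
Proof. destruct x; simpl; intros; try contradiction; auto. Qed.

Lemma Pf_lim (beta : R) : 0 < beta ->
  Lim_seq (eta_pprod beta) = Finite (Pf beta) /\
  exp (- (exp (- beta) / (1 - exp (- beta)) ^ 2)) <= Pf beta <= 1.
Proof.
  intros Hb. set (q := exp (- beta)).
  assert (Hq0 : 0 < q) by apply exp_pos.
  assert (Hq1 : q < 1). { unfold q. rewrite <- exp_0. apply exp_increasing. lra. }
  apply Rbar_finite_between.
  - rewrite <- (Lim_seq_const (exp (- (q / (1 - q) ^ 2)))).
    apply Lim_seq_le_loc. exists O. intros N _.
    eapply Rle_trans; [|apply pprod_lb; auto]. fold q. apply exp_le.
    assert (0 < (1 - q) ^ 2) by (apply pow_lt; lra).
    assert (0 <= q ^ S N) by (apply pow_le; lra).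
    apply Ropp_le_contravar. unfold Rdiv. apply Rmult_le_compat_r. left; apply Rinv_0_lt_compat; auto. lra.
  - rewrite <- (Lim_seq_const 1).
    apply Lim_seq_le_loc. exists O. intros N _. apply pprod_le1; auto.
Qed.

Lemma Pf_pos (beta : R) : 0 < beta -> 0 < Pf beta.
Proof.
  intros Hb. destruct (Pf_lim beta Hb) as [_ [H _]]. eapply Rlt_le_trans; [apply exp_pos|apply H].
Qed.

Lemma Pf_mono (b1 b2 : R) : 0 < b1 <= b2 -> Pf b1 <= Pf b2.
Proof.
  intros Hb. destruct (Pf_lim b1 ltac:(lra)) as [E1 _]. destruct (Pf_lim b2 ltac:(lra)) as [E2 _].
  assert (H : Rbar_le (Lim_seq (eta_pprod b1)) (Lim_seq (eta_pprod b2))).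
  { apply Lim_seq_le_loc. exists O. intros N _. apply pprod_mono; auto. }
  rewrite E1, E2 in H. simpl in H. auto.
Qed.

Definition g (h x : R) : R := if Req_EM_T h 0 then 1 - exp (- x) else exp (- h * x).

Definition w (T : CFT) (x y : R) (i : nat) : R :=
  match spec T i with Some (h, hb) => g h x * g hb y | None => 0 end.

Definition Wser (T : CFT) (x y : R) : R := Series (w T x y).

Definition Ef (c x y : R) : R := exp (c / 24 * (x + y)) / (Pf x * Pf y).

Definition dual (x : R) : R := 4 * PI ^ 2 / x.

Lemma Ef_pos c x y : 0 < x -> 0 < y -> 0 < Ef c x y.
Proof.
  intros. unfold Ef. apply Rdiv_lt_0_compat. apply exp_pos.
  apply Rmult_lt_0_compat; apply Pf_pos; auto.
Qed.

Lemma chi_eq c h beta : 0 < beta -> chi c h beta = exp (c / 24 * beta) / Pf beta * g h beta.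
Proof.
  intros Hb. unfold chi, eta, g. fold (Pf beta).
  assert (HP := Pf_pos beta Hb).
  assert (HE : exp (c / 24 * beta) = exp ((c - 1) / 24 * beta) * / exp (- beta / 24)).
  { rewrite <- exp_Ropp, <- exp_plus. f_equal. field. }
  rewrite HE. assert (0 < exp (- beta / 24)) by apply exp_pos.
  destruct (Req_EM_T h 0); field; split; lra.
Qed.

Lemma Zterm_eq T x y i : 0 < x -> 0 < y -> Zterm T x y i = Ef (cc T) x y * w T x y i.
Proof.
  intros Hx Hy. unfold Zterm, w. destruct (spec T i) as [[h hb]|].
  - rewrite !chi_eq by auto. unfold Ef.
    assert (HE : exp (cc T / 24 * (x + y)) = exp (cc T / 24 * x) * exp (cc T / 24 * y)).
    { rewrite <- exp_plus. f_equal. ring. }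
    rewrite HE. pose proof (Pf_pos x Hx). pose proof (Pf_pos y Hy). field; lra.
  - ring.
Qed.

Lemma Zpart_Series T x y : Zpart T x y = Series (Zterm T x y).
Proof. reflexivity. Qed.

Lemma Zpart_eq T x y : 0 < x -> 0 < y -> Zpart T x y = Ef (cc T) x y * Wser T x y.
Proof.
  intros Hx Hy. rewrite Zpart_Series. unfold Wser. rewrite <- Series_scal_l.
  apply Series_ext. intros; apply Zterm_eq; auto.
Qed.

Lemma g_nonneg h x : 0 < x -> 0 <= g h x.
Proof.
  intros Hx. unfold g. destruct (Req_EM_T h 0).
  - assert (exp (- x) <= 1) by (rewrite <- exp_0; apply exp_le; lra). lra.
  - left; apply exp_pos.
Qed.

Lemma g_le_exp h x : 0 < x -> g h x <= exp (- h * x).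
Proof.
  intros Hx. unfold g. destruct (Req_EM_T h 0) as [->|].
  - replace (- 0 * x) with 0 by ring. rewrite exp_0. pose proof (exp_pos (- x)). lra.
  - lra.
Qed.

Lemma w_nonneg T x y i : 0 < x -> 0 < y -> 0 <= w T x y i.
Proof.
  intros. unfold w. destruct (spec T i) as [[h hb]|]; [|lra].
  apply Rmult_le_pos; apply g_nonneg; auto.
Qed.

Lemma w_ex_series T x y : isCFT T -> 0 < x -> 0 < y -> ex_series (w T x y).
Proof.
  intros HT Hx Hy. destruct HT as (_ & _ & _ & _ & Hex & _).
  pose proof (Hex x y Hx Hy) as H.
  apply (ex_series_scal_l (/ Ef (cc T) x y)) in H.
  eapply ex_series_ext; [|apply H]. intros i. simpl. rewrite Zterm_eq by auto.
  unfold scal; simpl; unfold mult; simpl. field. apply Rgt_not_eq, Ef_pos; auto.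
Qed.

Lemma modular_W T x y : isCFT T -> 0 < x -> 0 < y ->
  Ef (cc T) x y * Wser T x y = Ef (cc T) (dual x) (dual y) * Wser T (dual x) (dual y).
Proof.
  intros HT Hx Hy. pose proof HT as (_ & _ & _ & _ & _ & Hmod).
  unfold dual. assert (0 < PI) by apply PI_RGT_0.
  rewrite <- !Zpart_eq; auto; try (apply Rdiv_lt_0_compat; auto; nra).
Qed.

Lemma ex_series_nonneg_le (a b : nat -> R) :
  (forall n, 0 <= a n <= b n) -> ex_series b -> ex_series a.
Proof.
  intros H Hb. apply (ex_series_le a b); auto.
  intros n. change (norm (a n)) with (Rabs (a n)). rewrite Rabs_pos_eq; apply H.
Qed.

Lemma sum_n_le_R (a b : nat -> R) N : (forall n, a n <= b n) -> sum_n a N <= sum_n b N.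
Proof.
  intros H. induction N. rewrite !sum_O; auto.
  rewrite !sum_Sn. unfold plus; simpl. pose proof (H (S N)). lra.
Qed.

Lemma series_le_psum (a b : nat -> R) (M : R) :
  (forall n, a n <= b n) -> ex_series a -> Rbar_le (psum b) (Finite M) -> Series a <= M.
Proof.
  intros H Hex Hb.
  assert (E : Lim_seq (sum_n a) = Finite (Series a)).
  { destruct Hex as [l Hl]. rewrite (is_series_unique a l Hl).
    apply is_lim_seq_unique. apply Hl. }
  assert (H2 : Rbar_le (Lim_seq (sum_n a)) (Lim_seq (sum_n b))).
  { apply Lim_seq_le_loc. exists O. intros; apply sum_n_le_R; auto. }
  rewrite E in H2. unfold psum in Hb.
  assert (H3 : Rbar_le (Finite (Series a)) (Finite M)).
  { eapply Rbar_le_trans; [apply H2|]. apply Hb. }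
  apply H3.
Qed.

Lemma sum_n_le_Series (a : nat -> R) N : (forall n, 0 <= a n) -> ex_series a -> sum_n a N <= Series a.
Proof.
  intros H Hex.
  assert (E : Lim_seq (sum_n a) = Finite (Series a)).
  { destruct Hex as [l Hl]. rewrite (is_series_unique a l Hl).
    apply is_lim_seq_unique. apply Hl. }
  assert (H2 : Rbar_le (Lim_seq (fun _ => sum_n a N)) (Lim_seq (sum_n a))).
  { apply Lim_seq_le_loc. exists N. intros n Hn. induction Hn. lra.
    rewrite sum_Sn. unfold plus; simpl. pose proof (H (S m)). lra. }
  rewrite Lim_seq_const, E in H2. apply H2.
Qed.

Lemma term_le_Series (a : nat -> R) N : (forall n, 0 <= a n) -> ex_series a -> a N <= Series a.
Proof.
  intros H Hex. eapply Rle_trans; [|apply (sum_n_le_Series a N); auto].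
  destruct N. rewrite sum_O; lra. rewrite sum_Sn. unfold plus; simpl.
  assert (0 <= sum_n a N).
  { induction N. rewrite sum_O; auto. rewrite sum_Sn. unfold plus; simpl. pose proof (H (S N)). lra. }
  lra.
Qed.

Lemma Series_nonneg (a : nat -> R) : (forall n, 0 <= a n) -> ex_series a -> 0 <= Series a.
Proof.
  intros H Hex. eapply Rle_trans; [apply (H O)|]. apply term_le_Series; auto.
Qed.

Definition hv (T : CFT) (alpha x y : R) (i : nat) : R := w T x y i - ZLterm T alpha x y i.

Lemma hv_cases T alpha i :
  (forall x y, ZLterm T alpha x y i = w T x y i) \/
  (exists h hb, spec T i = Some (h, hb) /\ h <> 0 /\ hb <> 0 /\
     alpha * (cc T - 1) / 24 <= h /\ alpha * (cc T - 1) / 24 <= hb /\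
     forall x y, ZLterm T alpha x y i = 0 /\ w T x y i = exp (- h * x) * exp (- hb * y)).
Proof.
  unfold ZLterm, w, g. destruct (spec T i) as [[h hb]|].
  - destruct (Req_EM_T h 0); destruct (Req_EM_T hb 0); try (left; intros; reflexivity).
    destruct (Rlt_dec (Rmin h hb) (alpha * (cc T - 1) / 24)) as [Hl|Hl].
    + left. intros. rewrite <- exp_plus. f_equal. ring.
    + right. exists h, hb. repeat split; auto.
      * apply Rnot_lt_le in Hl. eapply Rle_trans; [apply Hl| apply Rmin_l].
      * apply Rnot_lt_le in Hl. eapply Rle_trans; [apply Hl| apply Rmin_r].
  - left; reflexivity.
Qed.

Lemma ZL_bounds T alpha x y i : 0 < x -> 0 < y ->
  0 <= ZLterm T alpha x y i <= w T x y i /\ 0 <= hv T alpha x y i <= w T x y i.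
Proof.
  intros Hx Hy. unfold hv. pose proof (w_nonneg T x y i Hx Hy) as Hw.
  destruct (hv_cases T alpha i) as [H|(h&hb&_&_&_&_&_&H)].
  - rewrite H. lra.
  - destruct (H x y) as [-> _]. lra.
Qed.

Lemma ZL_ex T alpha x y : isCFT T -> 0 < x -> 0 < y -> ex_series (ZLterm T alpha x y).
Proof.
  intros HT Hx Hy.
  apply (ex_series_nonneg_le _ (w T x y)); [|apply w_ex_series; auto].
  intros; apply ZL_bounds; auto.
Qed.

Lemma hv_ex T alpha x y : isCFT T -> 0 < x -> 0 < y -> ex_series (hv T alpha x y).
Proof.
  intros HT Hx Hy.
  apply (ex_series_nonneg_le _ (w T x y)); [|apply w_ex_series; auto].
  intros; apply ZL_bounds; auto.
Qed.

Lemma W_split T alpha x y : isCFT T -> 0 < x -> 0 < y ->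
  Wser T x y = Series (ZLterm T alpha x y) + Series (hv T alpha x y).
Proof.
  intros HT Hx Hy.
  unfold Wser. rewrite <- Series_plus by (apply ZL_ex || apply hv_ex; auto).
  apply Series_ext. intros; unfold hv; ring.
Qed.

Lemma W_nonneg T x y : isCFT T -> 0 < x -> 0 < y -> 0 <= Wser T x y.
Proof. intros HT Hx Hy. apply Series_nonneg. intros; apply w_nonneg; auto. apply w_ex_series; auto. Qed.

Lemma hv_nonneg T alpha x y i : 0 < x -> 0 < y -> 0 <= hv T alpha x y i.
Proof. intros; apply ZL_bounds; auto. Qed.

Lemma hv_shift T alpha x1 y1 x2 y2 i :
  0 <= alpha -> 1 < cc T -> 0 < x1 -> 0 < y1 -> x1 <= x2 -> y1 <= y2 ->
  hv T alpha x2 y2 i <= exp (- (alpha * (cc T - 1) / 24) * ((x2 - x1) + (y2 - y1))) * hv T alpha x1 y1 i.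
Proof.
  intros Ha Hc Hx1 Hy1 Hx Hy. unfold hv.
  destruct (hv_cases T alpha i) as [H|(h&hb&_&_&_&Hh&Hhb&H)].
  - rewrite !H. replace (w T x2 y2 i - w T x2 y2 i) with 0 by ring.
    replace (w T x1 y1 i - w T x1 y1 i) with 0 by ring. rewrite Rmult_0_r; lra.
  - destruct (H x2 y2) as [-> ->]. destruct (H x1 y1) as [-> ->].
    rewrite !Rminus_0_r.
    set (m := alpha * (cc T - 1) / 24) in *.
    replace (exp (- h * x2) * exp (- hb * y2)) with
      (exp (- h * (x2 - x1) + - hb * (y2 - y1)) * (exp (- h * x1) * exp (- hb * y1))).
    2:{ rewrite <- !exp_plus. f_equal. ring. }
    apply Rmult_le_compat_r. left; apply Rmult_lt_0_compat; apply exp_pos.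
    apply exp_le. nra.
Qed.

Definition Dl (T : CFT) (i : nat) : R :=
  match spec T i with Some (h, hb) => h + hb | None => 0 end.

Lemma hv_shift_D T alpha x1 x2 i :
  0 < x1 -> x1 <= x2 -> Dl T i > cc T / 12 + 0 ->
  hv T alpha x2 x2 i = exp (- Dl T i * (x2 - x1)) * hv T alpha x1 x1 i.
Proof.
  intros Hx1 Hx12 HD. unfold hv, Dl in *.
  destruct (hv_cases T alpha i) as [HH|(h&hb&Hs&_&_&_&_&HH)].
  - rewrite !HH. ring.
  - rewrite Hs. destruct (HH x2 x2) as [-> ->]. destruct (HH x1 x1) as [-> ->].
    rewrite !Rminus_0_r. rewrite <- !exp_plus. f_equal. ring.
Qed.

Lemma PI_pos : 0 < PI. Proof. apply PI_RGT_0. Qed.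

Lemma dual_pos x : 0 < x -> 0 < dual x.
Proof. intros. unfold dual. pose proof PI_pos. apply Rdiv_lt_0_compat; nra. Qed.

Lemma dual_dual x : 0 < x -> dual (dual x) = x.
Proof. intros. unfold dual. pose proof PI_pos. field. split; nra. Qed.

Lemma dual_mul x : 0 < x -> x * dual x = 4 * PI ^ 2.
Proof. intros. unfold dual. field. lra. Qed.

Lemma light_bound alpha eps A B T x y : inClass alpha eps A B T -> 0 < x -> 0 < y ->
  4 * PI ^ 2 < x * y -> Series (ZLterm T alpha x y) <= B x y.
Proof.
  intros (HT & _ & HB) Hx Hy Hxy.
  apply (series_le_psum _ (ZLterm T alpha x y)); [intros; lra| apply ZL_ex; auto |].
  apply HB; auto.
Qed.

Definition Kd (alpha eps : R) (A : R -> R) (B : R -> R -> R) (beta : R) : R :=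
  (A beta + B beta beta) / (1 - exp (- eps * (beta - dual beta))).

Lemma dual_lt x : 2 * PI < x -> dual x < 2 * PI.
Proof.
  intros H. pose proof PI_pos. unfold dual. apply Rmult_lt_reg_r with x. lra.
  unfold Rdiv. rewrite Rmult_assoc, Rinv_l by lra. nra.
Qed.

Lemma diag_bound alpha eps A B T beta : 0 < alpha -> 0 < eps -> inClass alpha eps A B T ->
  2 * PI < beta -> Wser T beta beta <= Kd alpha eps A B beta.
Proof.
  intros Ha He HC Hb. pose proof HC as (HT & HA & HB).
  pose proof PI_pos as Hpi.
  set (b' := dual beta).
  assert (Hb'0 : 0 < b') by (apply dual_pos; lra).
  assert (Hb'1 : b' < 2 * PI) by (apply dual_lt; auto).
  assert (Hbpos : 0 < beta) by lra.
  set (th := exp (- eps * (beta - b'))).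
  assert (Hth : th < 1). { unfold th. rewrite <- exp_0. apply exp_increasing. nra. }
  assert (Hth0 : 0 < th) by apply exp_pos.
  set (c := cc T).
  assert (Hc : 1 < c) by (destruct HT; auto).
  set (hv1 := fun i => if Rle_dec (Dl T i) (c / 12 + eps) then hv T alpha beta beta i else 0).
  set (hv2 := fun i => if Rle_dec (Dl T i) (c / 12 + eps) then 0 else hv T alpha beta beta i).
  set (hv2' := fun i => if Rle_dec (Dl T i) (c / 12 + eps) then 0 else hv T alpha b' b' i).
  assert (Hhv := hv_nonneg T alpha beta beta).
  assert (Hhv' := hv_nonneg T alpha b' b').
  assert (Hw := fun i => ZL_bounds T alpha beta beta i Hbpos Hbpos).
  assert (Hw' := fun i => ZL_bounds T alpha b' b' i Hb'0 Hb'0).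
  assert (E1 : ex_series hv1).
  { apply (ex_series_nonneg_le _ (w T beta beta)); [|apply w_ex_series; auto].
    intros i; unfold hv1; destruct Rle_dec; [apply Hw| split; [lra| apply w_nonneg; auto]]. }
  assert (E2 : ex_series hv2).
  { apply (ex_series_nonneg_le _ (w T beta beta)); [|apply w_ex_series; auto].
    intros i; unfold hv2; destruct Rle_dec; [split; [lra| apply w_nonneg; auto]|apply Hw]. }
  assert (E2' : ex_series hv2').
  { apply (ex_series_nonneg_le _ (w T b' b')); [|apply w_ex_series; auto].
    intros i; unfold hv2'; destruct Rle_dec; [split; [lra| apply w_nonneg; auto]|apply Hw']. }
  assert (Hsplit : Series (hv T alpha beta beta) = Series hv1 + Series hv2).
  { rewrite <- Series_plus by auto. apply Series_ext. intros i. unfold hv1, hv2.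
    destruct Rle_dec; ring. }
  assert (H1 : Series hv1 <= A beta).
  { apply (series_le_psum _ (lightTerm T eps beta)); auto.
    intros i. unfold hv1, lightTerm.
    assert (Hi := Hhv i).
    destruct (hv_cases T alpha i) as [HH|(h&hb&Hs&_&_&_&_&HH)].
    - unfold hv. rewrite HH. replace (w T beta beta i - w T beta beta i) with 0 by ring.
      destruct Rle_dec; destruct (spec T i) as [[h hb]|]; try lra;
        try (destruct Rle_dec; try lra; left; apply exp_pos).
    - unfold Dl. rewrite Hs. unfold hv. destruct (HH beta beta) as [-> ->].
      destruct Rle_dec; [|lra]. rewrite Rminus_0_r, <- exp_plus. apply exp_le. nra. }
  assert (H2 : Series hv2 <= exp (- (c / 12 + eps) * (beta - b')) * Series hv2').
  { rewrite <- Series_scal_l. apply Series_le.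
    2:{ apply (ex_series_scal_l (exp (- (c / 12 + eps) * (beta - b')))) in E2'.
        eapply ex_series_ext; [|apply E2']. intros; reflexivity. }
    intros i. unfold hv2, hv2'. destruct Rle_dec as [Hle|Hle].
    - lra.
    - apply Rnot_le_lt in Hle.
      assert (Hle' : Dl T i > cc T / 12 + 0) by (unfold c in Hle; lra).
      split. apply Hhv; lra. rewrite (hv_shift_D T alpha b' beta i) by lra.
      apply Rmult_le_compat_r. apply Hhv'; lra. apply exp_le. nra. }
  assert (H2' : Series hv2' <= Wser T b' b').
  { apply Series_le. intros i; unfold hv2'; destruct Rle_dec.
    split; [lra|apply w_nonneg; auto]. apply Hw'. apply w_ex_series; auto. }
  assert (Hmod := modular_W T beta beta HT Hbpos Hbpos). fold b' in Hmod.
  assert (HPf : Pf b' <= Pf beta) by (apply Pf_mono; lra).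
  assert (HPf0 := Pf_pos b' Hb'0).
  assert (HWb : 0 <= Wser T beta beta) by (apply W_nonneg; auto).
  assert (HWb' : 0 <= Wser T b' b') by (apply W_nonneg; auto).
  assert (H3 : exp (- (c / 12 + eps) * (beta - b')) * Wser T b' b' <= th * Wser T beta beta).
  { unfold Ef in Hmod. fold c in Hmod.
    assert (Hr : Wser T b' b' = exp (c / 12 * (beta - b')) * (Pf b' * Pf b' / (Pf beta * Pf beta)) * Wser T beta beta).
    { assert (HPb := Pf_pos beta Hbpos).
      apply Rmult_eq_reg_l with (exp (c / 24 * (b' + b')) / (Pf b' * Pf b')).
      2:{ apply Rgt_not_eq. apply Rdiv_lt_0_compat. apply exp_pos. nra. }
      rewrite <- Hmod. replace (exp (c / 24 * (beta + beta))) with (exp (c / 24 * (b' + b')) * exp (c / 12 * (beta - b'))).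
      2:{ rewrite <- exp_plus. f_equal. field. }
      field. split; lra. }
    rewrite Hr.
    replace (exp (- (c / 12 + eps) * (beta - b')) * (exp (c / 12 * (beta - b')) * (Pf b' * Pf b' / (Pf beta * Pf beta)) * Wser T beta beta))
      with (th * (Pf b' * Pf b' / (Pf beta * Pf beta)) * Wser T beta beta).
    2:{ unfold th. replace (- eps * (beta - b')) with (- (c / 12 + eps) * (beta - b') + c / 12 * (beta - b')) by ring.
        rewrite exp_plus. ring. }
    assert (HPb := Pf_pos beta Hbpos).
    assert (Pf b' * Pf b' / (Pf beta * Pf beta) <= 1).
    { apply Rmult_le_reg_r with (Pf beta * Pf beta). nra. unfold Rdiv. rewrite Rmult_assoc, Rinv_l by nra. nra. }
    assert (0 <= Pf b' * Pf b' / (Pf beta * Pf beta)) by (apply Rdiv_le_0_compat; nra).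
    apply Rmult_le_compat_r; auto. nra. }
  assert (HL := light_bound alpha eps A B T beta beta HC Hbpos Hbpos).
  assert (HL' : Series (ZLterm T alpha beta beta) <= B beta beta) by (apply HL; nra).
  rewrite (W_split T alpha beta beta HT Hbpos Hbpos) in *.
  assert (Hexp0 : 0 < exp (- (c / 12 + eps) * (beta - b'))) by apply exp_pos.
  unfold Kd. fold b'. fold th.
  apply Rmult_le_reg_r with (1 - th). lra.
  unfold Rdiv. rewrite Rmult_assoc, Rinv_l by lra.
  nra.
Qed.

Definition Good (alpha eps : R) (A : R -> R) (x y : R) : Prop :=
  forall B : R -> R -> R, exists K, forall T, inClass alpha eps A B T -> Wser T x y <= K.

Definition swapT (T : CFT) : CFT :=
  mkCFT (cc T) (fun i => match spec T i with Some (h, hb) => Some (hb, h) | None => None end).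

Lemma w_swap T x y i : w (swapT T) x y i = w T y x i.
Proof. unfold w, swapT; simpl. destruct (spec T i) as [[h hb]|]; [ring|reflexivity]. Qed.

Lemma Zterm_swap T x y i : Zterm (swapT T) x y i = Zterm T y x i.
Proof. unfold Zterm, swapT; simpl. destruct (spec T i) as [[h hb]|]; [ring|reflexivity]. Qed.

Lemma Zpart_swap T x y : Zpart (swapT T) x y = Zpart T y x.
Proof. rewrite !Zpart_Series. apply Series_ext. intros; apply Zterm_swap. Qed.

Lemma Wser_swap T x y : Wser (swapT T) x y = Wser T y x.
Proof. unfold Wser. apply Series_ext. intros; apply w_swap. Qed.

Lemma lightTerm_swap T eps beta i : lightTerm (swapT T) eps beta i = lightTerm T eps beta i.
Proof.
  unfold lightTerm, swapT; simpl. destruct (spec T i) as [[h hb]|]; [|reflexivity].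
  replace (hb + h) with (h + hb) by ring. reflexivity.
Qed.

Lemma ZLterm_swap T alpha x y i : ZLterm (swapT T) alpha x y i = ZLterm T alpha y x i.
Proof.
  unfold ZLterm, swapT; simpl. destruct (spec T i) as [[h hb]|]; [|reflexivity].
  destruct (Req_EM_T hb 0); destruct (Req_EM_T h 0); try ring.
  rewrite Rmin_comm. destruct Rlt_dec; [|reflexivity]. f_equal. ring.
Qed.

Lemma psum_ext (f g : nat -> R) : (forall i, f i = g i) -> psum f = psum g.
Proof.
  intros H. unfold psum. apply Lim_seq_ext. intros n. apply sum_n_ext. auto.
Qed.

Lemma inClass_swap alpha eps A B T : inClass alpha eps A B T ->
  inClass alpha eps A (fun x y => B y x) (swapT T).
Proof.
  intros (HT & HA & HB). split; [|split].
  - destruct HT as (Hc & Hw & (i0 & Hi0 & Hu) & Hj & Hex & Hmod).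
    unfold isCFT, swapT; simpl. split; [auto|]. split; [|split; [|split; [|split]]].
    + intros i h hb Hs. destruct (spec T i) as [[h' hb']|] eqn:E; [|discriminate].
      injection Hs as <- <-. destruct (Hw i h' hb' E); auto.
    + exists i0. rewrite Hi0. split; auto. intros i Hs.
      destruct (spec T i) as [[h' hb']|] eqn:E; [|discriminate].
      injection Hs as H1 H2. subst. apply Hu; auto.
    + intros i h hb Hs Hz. destruct (spec T i) as [[h' hb']|] eqn:E; [|discriminate].
      injection Hs as H1 H2. rewrite <- H1, <- H2 in *.
      destruct (Hj i h' hb' E ltac:(tauto)) as [[Ha Hb]|(J & HJ & [[Ha Hb]|[Ha Hb]])].
      * left; split; auto.
      * right. exists J. split; auto.
      * right. exists J. split; auto.
    + intros bL bR HL HR. eapply ex_series_ext; [|apply (Hex bR bL HR HL)].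
      intros i. symmetry. apply (Zterm_swap T bL bR i).
    + intros bL bR HL HR. rewrite !(Zpart_swap T). apply Hmod; auto.
  - intros beta Hb. erewrite psum_ext; [apply HA; auto|]. intros; apply lightTerm_swap.
  - intros bL bR HL HR Hp. unfold ZtildeL. erewrite psum_ext; [apply HB; auto; nra|].
    intros; apply ZLterm_swap.
Qed.

Lemma Good_swap alpha eps A x y : Good alpha eps A x y -> Good alpha eps A y x.
Proof.
  intros HG B. destruct (HG (fun x y => B y x)) as [K HK]. exists K.
  intros T HT. rewrite <- Wser_swap. apply HK. apply inClass_swap; auto.
Qed.

Definition rho (q1 q2 : R) : R := Pf q1 * Pf q2 / (Pf (dual q1) * Pf (dual q2)).

Lemma rho_pos q1 q2 : 0 < q1 -> 0 < q2 -> 0 < rho q1 q2.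
Proof.
  intros. unfold rho. pose proof (Pf_pos q1 H). pose proof (Pf_pos q2 H0).
  pose proof (Pf_pos (dual q1) (dual_pos q1 H)). pose proof (Pf_pos (dual q2) (dual_pos q2 H0)).
  apply Rdiv_lt_0_compat; nra.
Qed.

Lemma W_dual T q1 q2 : isCFT T -> 0 < q1 -> 0 < q2 ->
  Wser T q1 q2 = exp (cc T / 24 * (dual q1 + dual q2 - q1 - q2)) * rho q1 q2 * Wser T (dual q1) (dual q2).
Proof.
  intros HT H1 H2. pose proof (modular_W T q1 q2 HT H1 H2) as Hm.
  pose proof (Pf_pos q1 H1). pose proof (Pf_pos q2 H2).
  pose proof (Pf_pos (dual q1) (dual_pos q1 H1)). pose proof (Pf_pos (dual q2) (dual_pos q2 H2)).
  unfold Ef in Hm. unfold rho.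
  apply Rmult_eq_reg_l with (exp (cc T / 24 * (q1 + q2)) / (Pf q1 * Pf q2)).
  2:{ apply Rgt_not_eq. apply Rdiv_lt_0_compat. apply exp_pos. nra. }
  rewrite Hm.
  replace (exp (cc T / 24 * (dual q1 + dual q2))) with
    (exp (cc T / 24 * (q1 + q2)) * exp (cc T / 24 * (dual q1 + dual q2 - q1 - q2))).
  2:{ rewrite <- exp_plus. f_equal. ring. }
  field; repeat split; try lra; try (apply Rgt_not_eq, exp_pos).
Qed.

Lemma Series_hv_shift T alpha x1 y1 x2 y2 :
  isCFT T -> 0 <= alpha -> 0 < x1 -> 0 < y1 -> x1 <= x2 -> y1 <= y2 ->
  Series (hv T alpha x2 y2) <=
  exp (- (alpha * (cc T - 1) / 24) * ((x2 - x1) + (y2 - y1))) * Series (hv T alpha x1 y1).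
Proof.
  intros HT Ha H1 H2 H3 H4.
  assert (Hc : 1 < cc T) by (destruct HT; auto).
  rewrite <- Series_scal_l. apply Series_le.
  - intros i. split. apply hv_nonneg; lra. apply hv_shift; auto.
  - pose proof (hv_ex T alpha x1 y1 HT H1 H2) as E.
    apply (ex_series_scal_l (exp (- (alpha * (cc T - 1) / 24) * ((x2 - x1) + (y2 - y1))))) in E.
    eapply ex_series_ext; [|apply E]. intros; reflexivity.
Qed.

Lemma Series_hv_le_W T alpha x y : isCFT T -> 0 < x -> 0 < y -> Series (hv T alpha x y) <= Wser T x y.
Proof.
  intros HT Hx Hy. rewrite (W_split T alpha x y HT Hx Hy).
  assert (0 <= Series (ZLterm T alpha x y)).
  { apply Series_nonneg. intros; apply ZL_bounds; auto. apply ZL_ex; auto. }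
  lra.
Qed.

Lemma K1 alpha eps A x y : 0 < alpha -> 0 < eps -> 2 * PI < x -> 2 * PI < y -> Good alpha eps A x y.
Proof.
  intros Ha He Hx Hy B. pose proof PI_pos.
  set (m := Rmin x y).
  assert (Hm : 2 * PI < m) by (unfold m; apply Rmin_glb_lt; auto).
  exists (B x y + Kd alpha eps A B m). intros T HC. pose proof HC as (HT & _ & _).
  assert (Hx0 : 0 < x) by lra. assert (Hy0 : 0 < y) by lra. assert (Hm0 : 0 < m) by lra.
  rewrite (W_split T alpha x y HT Hx0 Hy0).
  assert (HL : Series (ZLterm T alpha x y) <= B x y) by (apply (light_bound alpha eps A B T); auto; nra).
  assert (HS := Series_hv_shift T alpha m m x y HT ltac:(lra) Hm0 Hm0 (Rmin_l x y) (Rmin_r x y)).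
  assert (Hc : 1 < cc T) by (destruct HT; auto).
  assert (He1 : exp (- (alpha * (cc T - 1) / 24) * ((x - m) + (y - m))) <= 1).
  { apply Rle_trans with (exp 0); [|rewrite exp_0; lra]. apply exp_le. assert (m <= x) by (unfold m; apply Rmin_l).
    assert (m <= y) by (unfold m; apply Rmin_r).
    assert (Hp0 : 0 <= alpha * (cc T - 1) / 24) by (unfold Rdiv; apply Rmult_le_pos; [nra|lra]).
    assert (Hp : 0 <= alpha * (cc T - 1) / 24 * ((x - m) + (y - m))) by (apply Rmult_le_pos; lra).
    lra. }
  assert (HH := Series_hv_le_W T alpha m m HT Hm0 Hm0).
  assert (HD := diag_bound alpha eps A B T m Ha He HC Hm).
  assert (0 <= Series (hv T alpha m m)).
  { apply Series_nonneg. intros; apply hv_nonneg; auto. apply hv_ex; auto. }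
  nra.
Qed.

Lemma chain alpha eps A x y q1 q2 : 0 < alpha -> 0 < x -> 0 < y -> 4 * PI ^ 2 < x * y ->
  0 < q1 -> q1 <= x -> 0 < q2 -> q2 <= y ->
  dual q1 + dual q2 - q1 - q2 <= alpha * ((x - q1) + (y - q2)) ->
  Good alpha eps A (dual q1) (dual q2) -> Good alpha eps A x y.
Proof.
  intros Ha Hx Hy Hxy Hq1 Hq1x Hq2 Hq2y Hcond HG B.
  destruct (HG B) as [K HK].
  set (S := dual q1 + dual q2 - q1 - q2) in *.
  exists (B x y + exp (S / 24) * rho q1 q2 * Rmax K 0). intros T HC.
  pose proof HC as (HT & _ & _).
  assert (Hc : 1 < cc T) by (destruct HT; auto).
  rewrite (W_split T alpha x y HT Hx Hy).
  assert (HL : Series (ZLterm T alpha x y) <= B x y) by (apply (light_bound alpha eps A B T); auto).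
  assert (HS := Series_hv_shift T alpha q1 q2 x y HT ltac:(lra) Hq1 Hq2 Hq1x Hq2y).
  assert (HH := Series_hv_le_W T alpha q1 q2 HT Hq1 Hq2).
  rewrite (W_dual T q1 q2 HT Hq1 Hq2) in HH. fold S in HH.
  assert (HKT := HK T HC).
  assert (HW0 : 0 <= Wser T (dual q1) (dual q2)) by (apply W_nonneg; auto; apply dual_pos; auto).
  assert (Hr := rho_pos q1 q2 Hq1 Hq2).
  set (b := (cc T - 1) / 24) in *.
  assert (Hb : 0 < b) by (unfold b; lra).
  set (G := (x - q1) + (y - q2)) in *.
  assert (Hexp : exp (- (alpha * (cc T - 1) / 24) * G) * exp (cc T / 24 * S) <= exp (S / 24)).
  { rewrite <- exp_plus. apply exp_le.
    replace (alpha * (cc T - 1) / 24) with (alpha * b) by (unfold b; field).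
    replace (cc T / 24) with (b + 1 / 24) by (unfold b; field).
    assert (b * S <= b * (alpha * G)) by (apply Rmult_le_compat_l; lra). nra. }
  assert (HKm : Wser T (dual q1) (dual q2) <= Rmax K 0) by (eapply Rle_trans; [apply HKT|apply Rmax_l]).
  assert (Hhv0 : 0 <= Series (hv T alpha q1 q2)).
  { apply Series_nonneg. intros; apply hv_nonneg; auto. apply hv_ex; auto. }
  assert (He1 : 0 < exp (- (alpha * (cc T - 1) / 24) * G)) by apply exp_pos.
  assert (He2 : 0 < exp (cc T / 24 * S)) by apply exp_pos.
  assert (HKm0 : 0 <= Rmax K 0) by apply Rmax_r.
  assert (Hfin : exp (- (alpha * (cc T - 1) / 24) * G) * Series (hv T alpha q1 q2) <=
                 exp (S / 24) * rho q1 q2 * Rmax K 0).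
  { eapply Rle_trans. apply Rmult_le_compat_l. lra. apply HH.
    eapply Rle_trans. apply Rmult_le_compat_l. lra.
    apply Rmult_le_compat_l. apply Rmult_le_pos; lra. apply HKm.
    replace (exp (- (alpha * (cc T - 1) / 24) * G) * (exp (cc T / 24 * S) * rho q1 q2 * Rmax K 0))
      with ((exp (- (alpha * (cc T - 1) / 24) * G) * exp (cc T / 24 * S)) * (rho q1 q2 * Rmax K 0)) by ring.
    replace (exp (S / 24) * rho q1 q2 * Rmax K 0) with (exp (S / 24) * (rho q1 q2 * Rmax K 0)) by ring.
    apply Rmult_le_compat_r. apply Rmult_le_pos; lra. auto. }
  lra.
Qed.

Definition Dd (alpha a b : R) : R :=
  alpha * (b - 2 * PI) + alpha * (dual a - 2 * PI) - (dual a - a).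

Lemma dual_gt x : 0 < x < 2 * PI -> 2 * PI < dual x.
Proof.
  intros H. pose proof PI_pos. pose proof (dual_mul x ltac:(lra)). nra.
Qed.

Lemma dual_2pi : dual (2 * PI) = 2 * PI.
Proof. unfold dual. pose proof PI_pos. field. lra. Qed.

Lemma dual_near x eta : 0 < eta <= PI -> x = 2 * PI - eta -> dual x - x <= 4 * eta.
Proof.
  intros He Hx. pose proof PI_pos. assert (Hx0 : 0 < x) by lra.
  pose proof (dual_mul x Hx0). subst x. nra.
Qed.

Lemma BaseL alpha eps A a b : 0 < alpha -> 0 < eps -> 0 < a < 2 * PI -> 2 * PI < b ->
  4 * PI ^ 2 < a * b -> dual a - a < alpha * (b - 2 * PI) -> Good alpha eps A a b.
Proof.
  intros Ha He Hab Hb Hp Hc. pose proof PI_pos.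
  set (delta := alpha * (b - 2 * PI) - (dual a - a)).
  set (eta := Rmin PI (delta / 4)).
  assert (Heta : 0 < eta <= PI).
  { unfold eta. split. apply Rmin_glb_lt. lra. unfold delta; lra. apply Rmin_l. }
  assert (Heta2 : eta <= delta / 4) by apply Rmin_r.
  set (t := 2 * PI - eta).
  assert (Ht : dual t - t <= 4 * eta) by (apply (dual_near t eta); auto).
  assert (Hae : 0 <= alpha * eta) by nra.
  apply (chain alpha eps A a b a t); auto; try lra; unfold t in *; try lra.
  - unfold delta in *. nra.
  - apply K1; auto. apply dual_gt; lra. apply dual_gt; lra.
Qed.

Lemma EdgeL alpha eps A b : 0 < alpha -> 0 < eps -> 2 * PI < b -> Good alpha eps A (2 * PI) b.
Proof.
  intros Ha He Hb. pose proof PI_pos.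
  set (delta := alpha * (b - 2 * PI)).
  assert (Hd : 0 < delta) by (unfold delta; nra).
  set (eta := Rmin PI (delta / 8)).
  assert (Heta : 0 < eta <= PI).
  { unfold eta. split. apply Rmin_glb_lt; lra. apply Rmin_l. }
  assert (Heta2 : eta <= delta / 8) by apply Rmin_r.
  set (t := 2 * PI - eta).
  assert (Ht : dual t - t <= 4 * eta) by (apply (dual_near t eta); auto).
  assert (Hae : 0 <= alpha * eta) by nra.
  apply (chain alpha eps A (2 * PI) b t t); auto; try lra; unfold t in *; try lra.
  - nra.
  - unfold delta in *. nra.
  - apply K1; auto; apply dual_gt; lra.
Qed.

Lemma StepL alpha eps A a b T : 0 < alpha -> 0 < a -> 0 < b -> 4 * PI ^ 2 < a * b ->
  0 < T -> T <= b ->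
  dual a + dual T - a - T <= alpha * (b - T) ->
  Good alpha eps A (dual T) (dual a) -> Good alpha eps A a b.
Proof.
  intros Ha Ha0 Hb0 Hp HT HTb Hc HG.
  apply (chain alpha eps A a b a T); auto; try lra.
  apply Good_swap; auto.
Qed.

Lemma concave_min (p q u1 u u2 : R) : 0 < u1 <= u -> u <= u2 ->
  Rmin (p * u1 + q - dual u1) (p * u2 + q - dual u2) <= p * u + q - dual u.
Proof.
  intros H1 H2. pose proof PI_pos.
  destruct (Req_dec u1 u2) as [E|Hne].
  - subst. assert (u = u2) by lra. subst. apply Rmin_l.
  - set (l := (u2 - u) / (u2 - u1)).
    assert (Hl : 0 <= l <= 1).
    { unfold l. split. apply Rdiv_le_0_compat; lra.
      apply Rmult_le_reg_r with (u2 - u1). lra. unfold Rdiv. rewrite Rmult_assoc, Rinv_l by lra. lra. }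
    assert (Hid : p * u + q - dual u =
      l * (p * u1 + q - dual u1) + (1 - l) * (p * u2 + q - dual u2)
      + 4 * PI ^ 2 * ((u - u1) * (u2 - u) / (u * u1 * u2))).
    { unfold l, dual. field. repeat split; lra. }
    assert (Hpos : 0 <= 4 * PI ^ 2 * ((u - u1) * (u2 - u) / (u * u1 * u2))).
    { apply Rmult_le_pos. nra. apply Rdiv_le_0_compat. nra.
      apply Rmult_lt_0_compat. nra. lra. }
    rewrite Hid.
    set (X := p * u1 + q - dual u1). set (Y := p * u2 + q - dual u2).
    assert (Rmin X Y <= X) by apply Rmin_l. assert (Rmin X Y <= Y) by apply Rmin_r.
    nra.
Qed.

Lemma T_root alpha kappa : 0 < alpha <= 1 -> (0 < kappa \/ alpha < 1) ->
  let s := sqrt (kappa ^ 2 + 16 * PI ^ 2 * (1 - alpha)) in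
  let T := 8 * PI ^ 2 / (kappa + s) in
  0 < T /\ (1 - alpha) * T ^ 2 + kappa * T - 4 * PI ^ 2 = 0.
Proof.
  intros Ha Hk s T. pose proof PI_pos.
  assert (Hs0 : 0 <= kappa ^ 2 + 16 * PI ^ 2 * (1 - alpha)) by nra.
  assert (Hs : s * s = kappa ^ 2 + 16 * PI ^ 2 * (1 - alpha)) by (apply sqrt_sqrt; auto).
  assert (Hsp : 0 <= s) by apply sqrt_pos.
  assert (Hks : 0 < kappa + s).
  { destruct Hk as [Hk|Hk]. lra.
    destruct (Rlt_dec 0 (kappa + s)); auto. exfalso.
    assert (s <= - kappa) by lra. assert (s * s <= kappa * kappa) by nra.
    assert (0 < PI ^ 2 * (1 - alpha)) by (apply Rmult_lt_0_compat; nra). nra. }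
  split.
  - unfold T. apply Rdiv_lt_0_compat; nra.
  - assert (Hid : (1 - alpha) * T ^ 2 + kappa * T - 4 * PI ^ 2 =
      4 * PI ^ 2 * (16 * PI ^ 2 * (1 - alpha) + kappa ^ 2 - s * s) / (kappa + s) ^ 2).
    { unfold T. field. lra. }
    rewrite Hid, Hs. field. lra.
Qed.

Lemma term alpha eps A (n : nat) : 0 < alpha <= 1 -> 0 < eps ->
  forall a b, 0 < a < 2 * PI -> 2 * PI < b -> 4 * PI ^ 2 < a * b -> 0 < Dd alpha a b ->
  alpha * (dual a - 2 * PI) <= INR n * Rmin (Dd alpha a b) (alpha * (b - dual a)) ->
  Good alpha eps A a b.
Proof.
  intros Ha He. pose proof PI_pos as Hpi. assert (Ha1 : 0 < alpha) by (destruct Ha; auto).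
  induction n as [|m IH]; intros a b Ha0 Hb Hab Hd Hn.
  -
    simpl in Hn. rewrite Rmult_0_l in Hn.
    set (a' := dual a) in *.
    assert (Ha' : 2 * PI < a') by (apply dual_gt; lra).
    destruct (Rlt_dec (alpha * (a' - 2 * PI)) (Dd alpha a b)) as [Hlt|Hge].
    + apply BaseL; auto; try lra; unfold Dd in Hlt; fold a' in Hlt; fold a'; lra.
    + exfalso. nra.
  - set (a' := dual a) in *.
    assert (Ha' : 2 * PI < a') by (apply dual_gt; lra).
    assert (Haa : a * a' = 4 * PI ^ 2) by (apply dual_mul; lra).
    assert (Hba : a' < b) by nra.
    set (d := Dd alpha a b) in *.
    assert (Hdd : d = alpha * (b - 2 * PI) + alpha * (a' - 2 * PI) - (a' - a)) by reflexivity.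
    destruct (Rlt_dec (alpha * (a' - 2 * PI)) d) as [Hlt|Hge].
    + apply BaseL; auto; try lra; fold a'; lra.
    + apply Rnot_lt_le in Hge.
      set (kappa := alpha * b - (a' - a)).
      assert (Hk : 0 < kappa \/ alpha < 1).
      { destruct (Rlt_dec alpha 1); [right; auto|left]. assert (alpha = 1) by lra. subst alpha.
        unfold kappa. lra. }
      destruct (T_root alpha kappa Ha Hk) as [HT0 HTq].
      set (T := 8 * PI ^ 2 / (kappa + sqrt (kappa ^ 2 + 16 * PI ^ 2 * (1 - alpha)))) in *.
      assert (HTT : T * dual T = 4 * PI ^ 2) by (apply dual_mul; auto).
      assert (HdT : dual T = (1 - alpha) * T + kappa).
      { apply Rmult_eq_reg_l with T; [|lra]. rewrite HTT. nra. }
      assert (Hf : alpha * (a' - 2 * PI) + alpha * (T - 2 * PI) - (T - dual T) = d).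
      { rewrite HdT, Hdd. unfold kappa. ring. }
      assert (HT2 : 2 * PI <= T).
      { destruct (Rlt_dec T (2 * PI)) as [Hl|Hl]; [|lra]. exfalso.
        assert (2 * PI < dual T) by (apply dual_gt; lra).
        assert ((alpha - 1) * (2 * PI) <= (alpha - 1) * T) by nra.
        nra. }
      assert (HTa : T < a').
      { destruct (Rlt_dec T a') as [Hl|Hl]; [auto|]. exfalso. apply Rnot_lt_le in Hl.
        assert (HdTa : dual T <= a).
        { apply Rmult_le_reg_l with T. lra. rewrite HTT. nra. }
        assert ((alpha - 1) * (T - a') <= 0) by nra.
        assert (alpha * (b - a') > 0) by nra.
        nra. }
      assert (HTb : T <= b) by lra.
      assert (Hcond : dual a + dual T - a - T <= alpha * (b - T)).
      { fold a'. nra. }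
      destruct (Req_dec T (2 * PI)) as [HTe|HTne].
      *
        apply (StepL alpha eps A a b T); auto; try lra.
        rewrite HTe, dual_2pi. fold a'. apply EdgeL; auto.
      * assert (HT2' : 2 * PI < T) by (destruct HT2 as [HH|HH]; [auto|exfalso; apply HTne; rewrite HH; reflexivity]).
        apply (StepL alpha eps A a b T); auto; try lra.
        fold a'.
        assert (HdT0 : 0 < dual T < 2 * PI).
        { split. apply dual_pos; lra. apply dual_lt; auto. }
        assert (Hdd2 : dual (dual T) = T) by (apply dual_dual; lra).
        assert (HD' : Dd alpha (dual T) a' = d).
        { unfold Dd. rewrite Hdd2. lra. }
        assert (Hconc : Rmin d (alpha * (b - a')) <= alpha * (a' - T)).
        { pose proof (concave_min (1 - 2 * alpha) (4 * PI * alpha + d) (2 * PI) T a' ltac:(lra) ltac:(lra)) as Hc.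
          rewrite dual_2pi in Hc.
          replace ((1 - 2 * alpha) * (2 * PI) + (4 * PI * alpha + d) - 2 * PI) with d in Hc by ring.
          replace ((1 - 2 * alpha) * a' + (4 * PI * alpha + d) - dual a') with (alpha * (b - a')) in Hc.
          2:{ assert (dual a' = a) by (unfold a'; apply dual_dual; lra). rewrite H. rewrite Hdd. ring. }
          replace ((1 - 2 * alpha) * T + (4 * PI * alpha + d) - dual T) with (alpha * (a' - T)) in Hc.
          2:{ rewrite HdT, Hdd. unfold kappa. ring. }
          auto. }
        apply IH; auto; try lra.
        -- apply Rmult_lt_reg_r with T. lra.
           replace (dual T * a' * T) with ((T * dual T) * a') by ring. rewrite HTT. apply Rmult_lt_compat_l; [nra|lra].
        -- rewrite HD'. auto.
        -- rewrite Hdd2.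
           set (mu := Rmin d (alpha * (b - a'))) in *.
           set (mu' := Rmin d (alpha * (a' - T))).
           assert (Hmu1 : mu <= d) by apply Rmin_l.
           assert (Hmu2 : mu' <= alpha * (a' - T)) by apply Rmin_r.
           assert (Hmu3 : mu <= mu') by (apply Rmin_glb; auto).
           assert (Hm0 : 0 <= INR m) by apply pos_INR.
           rewrite S_INR in Hn. nra.
Qed.

Lemma Dom_first alpha eps A x y : 0 < alpha <= 1 -> 0 < eps ->
  2 * PI < y -> phi alpha y < x -> Good alpha eps A x y.
Proof.
  intros Ha He Hy Hx. pose proof PI_pos as Hpi. assert (Ha1 : 0 < alpha) by lra.
  unfold phi in Hx.
  assert (H1 : 4 * PI ^ 2 / y < x) by (eapply Rle_lt_trans; [apply Rmax_l|apply Hx]).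
  set (m := 4 * PI - y) in *.
  set (s := sqrt (alpha ^ 2 * m ^ 2 + 16 * PI ^ 2 * (1 - alpha))) in *.
  assert (H2 : / 2 * (alpha * m + s) < x) by (eapply Rle_lt_trans; [apply Rmax_r|apply Hx]).
  assert (Hy0 : 0 < y) by lra.
  assert (Hxy : 4 * PI ^ 2 < x * y).
  { apply Rmult_lt_compat_r with (r := y) in H1; auto.
    unfold Rdiv in H1. rewrite Rmult_assoc, Rinv_l in H1 by lra. lra. }
  assert (Hx0 : 0 < x).
  { assert (0 < 4 * PI ^ 2 / y) by (apply Rdiv_lt_0_compat; nra). lra. }
  assert (Hs0 : 0 <= alpha ^ 2 * m ^ 2 + 16 * PI ^ 2 * (1 - alpha)) by nra.
  assert (Hs : s * s = alpha ^ 2 * m ^ 2 + 16 * PI ^ 2 * (1 - alpha)) by (apply sqrt_sqrt; auto).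
  assert (Hsp : 0 <= s) by apply sqrt_pos.
  assert (Hq : 0 < x ^ 2 - alpha * m * x - 4 * PI ^ 2 * (1 - alpha)).
  { assert (Hl : s < 2 * x - alpha * m) by lra.
    assert (s * s < (2 * x - alpha * m) * (2 * x - alpha * m)) by nra. nra. }
  assert (HD : 0 < Dd alpha x y).
  { unfold Dd. pose proof (dual_mul x Hx0) as Hm.
    apply Rmult_lt_reg_l with x; auto. rewrite Rmult_0_r.
    replace (x * (alpha * (y - 2 * PI) + alpha * (dual x - 2 * PI) - (dual x - x)))
      with (alpha * x * y - 2 * PI * alpha * x + alpha * (x * dual x) - 2 * PI * alpha * x - x * dual x + x * x) by ring.
    rewrite Hm. unfold m in Hq. nra. }
  destruct (Rtotal_order x (2 * PI)) as [Hlt|[Heq|Hgt]].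
  - assert (Hdx : 2 * PI < dual x) by (apply dual_gt; lra).
    assert (Hyd : dual x < y).
    { pose proof (dual_mul x Hx0). nra. }
    set (mu := Rmin (Dd alpha x y) (alpha * (y - dual x))).
    assert (Hmu : 0 < mu) by (unfold mu; apply Rmin_glb_lt; auto; nra).
    destruct (INR_archimed mu (alpha * (dual x - 2 * PI)) Hmu) as [n Hn].
    apply (term alpha eps A n Ha He); auto; try lra. fold mu. lra.
  - rewrite Heq. apply EdgeL; auto; lra.
  - apply K1; auto.
Qed.

Lemma Dom_good alpha eps A x y : 0 < alpha <= 1 -> 0 < eps -> Dom alpha x y ->
  Good alpha eps A x y /\ 0 < x /\ 0 < y.
Proof.
  intros Ha He [[Hy Hx]|[Hx Hy]]; pose proof PI_pos.
  - assert (Hx0 : 0 < x).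
    { unfold phi in Hx. assert (0 < 4 * PI ^ 2 / y) by (apply Rdiv_lt_0_compat; nra).
      assert (4 * PI ^ 2 / y <= Rmax (4 * PI ^ 2 / y)
       (/ 2 * (alpha * (4 * PI - y) + sqrt (alpha ^ 2 * (4 * PI - y) ^ 2 + 16 * PI ^ 2 * (1 - alpha))))) by apply Rmax_l.
      lra. }
    split; [apply Dom_first; auto|lra].
  - assert (Hy0 : 0 < y).
    { unfold phi in Hy. assert (0 < 4 * PI ^ 2 / x) by (apply Rdiv_lt_0_compat; nra).
      assert (4 * PI ^ 2 / x <= Rmax (4 * PI ^ 2 / x)
       (/ 2 * (alpha * (4 * PI - x) + sqrt (alpha ^ 2 * (4 * PI - x) ^ 2 + 16 * PI ^ 2 * (1 - alpha))))) by apply Rmax_l.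
      lra. }
    split; [apply Good_swap; apply Dom_first; auto|lra].
Qed.

Lemma vac_le T x y : isCFT T -> 0 < x -> 0 < y ->
  (1 - exp (- x)) * (1 - exp (- y)) <= Wser T x y.
Proof.
  intros HT Hx Hy. pose proof HT as (_ & _ & (i0 & Hi0 & _) & _).
  assert (E : w T x y i0 = (1 - exp (- x)) * (1 - exp (- y))).
  { unfold w, g. rewrite Hi0. destruct (Req_EM_T 0 0); [reflexivity|congruence]. }
  rewrite <- E. apply term_le_Series. intros; apply w_nonneg; auto. apply w_ex_series; auto.
Qed.

Lemma one_m_exp_pos x : 0 < x -> 0 < 1 - exp (- x).
Proof.
  intros. assert (exp (- x) < 1) by (rewrite <- exp_0; apply exp_increasing; lra). lra.
Qed.

Lemma bound_from_Good alpha eps A B x y : Good alpha eps A x y -> 0 < x -> 0 < y ->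
  exists K, forall T, inClass alpha eps A B T ->
    Rabs (ln (Zpart T x y) - cc T / 24 * (x + y)) <= K.
Proof.
  intros HG Hx Hy. destruct (HG B) as [K0 HK0].
  set (vac := (1 - exp (- x)) * (1 - exp (- y))).
  assert (Hvac : 0 < vac) by (unfold vac; apply Rmult_lt_0_compat; apply one_m_exp_pos; auto).
  set (K1' := Rmax K0 vac).
  assert (HK1 : 0 < K1') by (unfold K1'; eapply Rlt_le_trans; [apply Hvac|apply Rmax_r]).
  set (PP := Pf x * Pf y).
  assert (HPP : 0 < PP) by (unfold PP; apply Rmult_lt_0_compat; apply Pf_pos; auto).
  exists (Rabs (ln K1') + Rabs (ln vac) + Rabs (ln PP)).
  intros T HC. pose proof HC as (HT & _ & _).
  assert (HW1 := vac_le T x y HT Hx Hy). fold vac in HW1.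
  assert (HW2 : Wser T x y <= K1') by (eapply Rle_trans; [apply HK0; auto|apply Rmax_l]).
  assert (HW0 : 0 < Wser T x y) by lra.
  rewrite (Zpart_eq T x y Hx Hy). unfold Ef. fold PP.
  rewrite ln_mult by (try apply Rdiv_lt_0_compat; try apply exp_pos; auto).
  unfold Rdiv. rewrite ln_mult by (try apply exp_pos; try apply Rinv_0_lt_compat; auto).
  rewrite ln_exp, ln_Rinv by auto.
  assert (L1 : ln vac <= ln (Wser T x y)) by (apply ln_le; auto).
  assert (L2 : ln (Wser T x y) <= ln K1') by (apply ln_le; auto).
  replace (cc T / 24 * (x + y) + - ln PP + ln (Wser T x y) - cc T / 24 * (x + y))
    with (ln (Wser T x y) - ln PP) by ring.
  unfold Rabs. repeat destruct Rcase_abs; lra.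
Qed.

Lemma pos_of_div z : 0 < 4 * PI ^ 2 / z -> 0 < z.
Proof.
  intros H. pose proof PI_pos.
  destruct (Rtotal_order z 0) as [Hl|[He|Hg]]; auto.
  - exfalso. assert (/ z < 0) by (apply Rinv_lt_0_compat; auto).
    unfold Rdiv in H. nra.
  - exfalso. subst. unfold Rdiv in H. rewrite Rinv_0 in H. lra.
Qed.

Theorem corollary2 (alpha eps : R) (A : R -> R) (B : R -> R -> R) :
  0 < alpha <= 1 -> 0 < eps ->
  (forall beta, 2 * PI < beta -> 0 <= A beta) ->
  (forall bL bR, 0 < bL -> 0 < bR -> 4 * PI ^ 2 < bL * bR -> 0 <= B bL bR) ->
  (forall bL bR, Dom alpha bL bR ->
     exists K : R, forall T : CFT, inClass alpha eps A B T ->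
       Rabs (ln (Zpart T bL bR) - cc T / 24 * (bL + bR)) <= K) /\
  (forall bL bR, Dom alpha (4 * PI ^ 2 / bL) (4 * PI ^ 2 / bR) ->
     exists K : R, forall T : CFT, inClass alpha eps A B T ->
       Rabs (ln (Zpart T bL bR) - PI ^ 2 * cc T / 6 * (/ bL + / bR)) <= K).
Proof.
  intros Ha He _ _.
  assert (P1 : forall bL bR, Dom alpha bL bR ->
     exists K : R, forall T : CFT, inClass alpha eps A B T ->
       Rabs (ln (Zpart T bL bR) - cc T / 24 * (bL + bR)) <= K).
  { intros bL bR HD. destruct (Dom_good alpha eps A bL bR Ha He HD) as (HG & H1 & H2).
    apply bound_from_Good; auto. }
  split; auto.
  intros bL bR HD.
  destruct (Dom_good alpha eps A _ _ Ha He HD) as (_ & H1 & H2).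
  apply pos_of_div in H1. apply pos_of_div in H2.
  destruct (P1 _ _ HD) as [K HK]. exists K. intros T HC.
  pose proof HC as (HT & _ & _). pose proof HT as (_ & _ & _ & _ & _ & Hmod).
  rewrite (Hmod bL bR H1 H2).
  replace (PI ^ 2 * cc T / 6 * (/ bL + / bR)) with (cc T / 24 * (4 * PI ^ 2 / bL + 4 * PI ^ 2 / bR))
    by (field; lra).
  apply HK; auto.
Qed.
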